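(* Let $C=(C_1,\dots,C_K)$ with $C_k:=\mathbb{E}[Y_k\mid S_k]$ (classwise-calibrated scores). For $d$ equal to either the Brier divergence $d(P,R)=\sum_{k=1}^K(P_k-R_k)^2$ or the log-loss divergence $d(P,R)=\sum_{k=1}^K R_k\log(R_k/P_k)$ (with the convention $0\log 0=0$), $$\mathbb{E}[d(S,Y)]=\mathbb{E}[d(S,C)]+\mathbb{E}[d(C,Q)]+\mathbb{E}[d(Q,Y)],$$ where the expectation is over $X$ and $Y$.
   Context: Let $(X,Y)$ be jointly distributed with $X\in\mathcal{X}$ and $Y=(Y_1,\dots,Y_K)\in\{e_1,\dots,e_K\}$ (one-hot vectors of $\mathbb{R}^K$); $Q_k:=P(Y=e_k\mid X)$, $Q=(Q_1,\dots,Q_K)$; $S=(S_1,\dots,S_K)=f(X)$ in the probability simplex for a classifier $f$. All required expectations are assumed to exist and be finite. *)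

(* Defs.v *)
From HB Require Import structures.
From mathcomp Require Import all_boot all_order all_algebra.
From mathcomp Require Import all_classical all_reals all_analysis.
Set Implicit Arguments. Unset Strict Implicit. Unset Printing Implicit Defensive.
Import Order.TTheory GRing.Theory Num.Theory.
Local Open Scope classical_set_scope.
Local Open Scope ring_scope.

(* One-hot encoding: the label y : 'I_K is the vector e_y of R^K. *)
Definition onehot (R : realType) (K : nat) (y : 'I_K) : 'I_K -> R :=
  fun k => (y == k)%:R.

Definition simplex_valued (R : realType) (T : Type) (K : nat)
  (f : T -> 'I_K -> R) : Prop :=
  forall x, (forall k, 0 <= f x k) /\ \sum_(k < K) f x k = 1.

(* q (X .) k is a version of P(Y = e_k | X):  q(.,k) is measurable on the
   X-space, q(X,k) is integrable, and for every measurable A,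
   E[q(X,k) 1_{X in A}] = P(X in A, Y = e_k). *)
Definition is_cond_class_prob (d : measure_display) (Omega : measurableType d)
  (R : realType) (P : probability Omega R) (dX : measure_display)
  (TX : measurableType dX) (K : nat) (X : Omega -> TX) (lab : Omega -> 'I_K)
  (q : TX -> 'I_K -> R) : Prop :=
  forall k,
    measurable_fun setT (fun x => q x k) /\
    P.-integrable setT (fun w => (q (X w) k)%:E) /\
    forall A, measurable A ->
      (\int[P]_(w in X @^-1` A) (q (X w) k)%:E =
       P (X @^-1` A `&` [set w | lab w = k]))%E.

(* c k (S_k) is a version of E[Y_k | S_k] (classwise calibration map):
   c k is Borel measurable, c k (S_k) is integrable, and for every Borel B,
   E[c k (S_k) 1_{S_k in B}] = E[Y_k 1_{S_k in B}]. *)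
Definition is_classwise_calib (d : measure_display) (Omega : measurableType d)
  (R : realType) (P : probability Omega R) (K : nat)
  (S : Omega -> 'I_K -> R) (Y : Omega -> 'I_K -> R) (c : 'I_K -> R -> R) : Prop :=
  forall k,
    measurable_fun setT (c k) /\
    P.-integrable setT (fun w => (c k (S w k))%:E) /\
    forall B : set R, measurable B ->
      (\int[P]_(w in (fun w => S w k) @^-1` B) (c k (S w k))%:E =
       \int[P]_(w in (fun w => S w k) @^-1` B) (Y w k)%:E)%E.

Definition brier (R : realType) (K : nat) (p r : 'I_K -> R) : \bar R :=
  (\sum_(k < K) (p k - r k) ^+ 2)%:E.

(* Log-loss divergence d(P,R) = sum_k R_k log(R_k / P_k), with 0 log 0 = 0
   (terms with R_k = 0 vanish) and R_k log(R_k / 0) = +oo for R_k <> 0. *)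
Definition logterm (R : realType) (p r : R) : \bar R :=
  if r == 0 then 0%E
  else if p <= 0 then +oo%E
  else (r * ln (r / p))%:E.

Definition logdiv (R : realType) (K : nat) (p r : 'I_K -> R) : \bar R :=
  (\sum_(k < K) logterm (p k) (r k))%E.

(* Main.v *)
Require Import Defs.
From HB Require Import structures.
From mathcomp Require Import all_boot all_order all_algebra.
From mathcomp Require Import all_classical all_reals all_analysis.
From mathcomp Require Import measurable_realfun lra ring.
Set Implicit Arguments. Unset Strict Implicit. Unset Printing Implicit Defensive.
Import Order.TTheory GRing.Theory Num.Theory.
Local Open Scope classical_set_scope.
Local Open Scope ring_scope.

Section density.
Context d (T : measurableType d) (R : realType) (mu : {measure set T -> \bar R}).
Variable F : T -> R.
Hypothesis mF : measurable_fun setT F.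
Hypothesis F0 : forall x, 0 <= F x.
Local Open Scope ereal_scope.

Definition dens (A : set T) : \bar R := \int[mu]_(x in A) (F x)%:E.

Let dens0 : dens set0 = 0.
Proof. by rewrite /dens integral_set0. Qed.

Let dens_ge0 A : 0 <= dens A.
Proof. by apply: integral_ge0 => x _; rewrite lee_fin. Qed.

Let dens_sigma : semi_sigma_additive dens.
Proof.
apply: semi_sigma_additive_nng_induced.
  exact/measurable_EFinP.
by move=> x; rewrite lee_fin.
Qed.

HB.instance Definition _ := isMeasure.Build _ _ _ dens dens0 dens_ge0 dens_sigma.

Definition densm : {measure set T -> \bar R} := Measure.clone _ _ _ dens _.

Import HBNNSimple.

Lemma integral_dens (f : T -> \bar R) : (forall x, 0 <= f x) ->
    measurable_fun setT f ->
  \int[densm]_x f x = \int[mu]_x (f x * (F x)%:E).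
Proof.
move=> f0 mf; set g := fun x => (F x)%:E.
have mE : measurable [set: T] by [].
pose h := nnsfun_approx mE mf.
have -> : \int[densm]_x f x =
    lim (\int[dens]_x (EFin \o h n) x @[n --> \oo]).
  have fE x : [set: T] x -> f x = lim ((EFin \o h n) x @[n --> \oo]).
    by move=> Ex; apply/esym/cvg_lim => //; exact: cvg_nnsfun_approx.
  under eq_integral => x /[!inE] /fE -> //.
  apply: monotone_convergence => //.
  - move=> n; apply/measurable_EFinP.
    by apply: (measurable_funS measurableT) => //; exact/measurable_funP.
  - by move=> n x Ex //=; rewrite lee_fin.
  - by move=> x Ex a b ab; rewrite lee_fin; exact/lefP/nd_nnsfun_approx.
have -> : \int[mu]_x (f x * g x) =
    lim (\int[mu]_x ((EFin \o h n) \* g) x @[n --> \oo]).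
  have fg x : [set: T] x -> f x * g x = lim (((EFin \o h n) \* g) x @[n --> \oo]).
    by move=> Ex; apply/esym/cvg_lim => //; apply: cvgeZr;
      [by [] |exact: cvg_nnsfun_approx].
  under eq_integral => x /[!inE] /fg -> //.
  apply: monotone_convergence => [//| | |].
  - move=> n/=; apply: emeasurable_funM; first exact/measurable_EFinP/measurable_funP.
    exact/measurable_EFinP.
  - by move=> n x Ex //=; rewrite mule_ge0// lee_fin.
  - by move=> x Ex a b ab/=; rewrite lee_wpmul2r ?lee_fin//; exact/lefP/nd_nnsfun_approx.
suff suf n : \int[mu]_x (((EFin \o h n) \* g) x) =
    \int[dens]_x (EFin \o h n) x.
  by apply: congr_lim; apply/funext => n; rewrite suf.
transitivity (\int[dens]_x
   (\sum_(y \in range (h n)) (y * \1_(h n @^-1` [set y]) x)%:E)); last first.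
  by apply: eq_integral => t tE; rewrite /= fimfunE -fsumEFin.
have indich m r : measurable_fun setT (fun x => (r * \1_(h m @^-1` [set r]) x)%:E).
  by apply: (measurable_comp measurableT) => //; exact: measurable_funM.
rewrite ge0_integral_fsum//; last by move=> m y Ey; exact: nnfun_muleindic_ge0.
transitivity (\int[mu]_x (\sum_(y \in range (h n))
    (y * \1_(h n @^-1` [set y]) x)%:E * g x)).
  under [RHS]eq_integral => x xE.
    rewrite -ge0_mule_fsuml => [|y]; last exact: nnfun_muleindic_ge0.
    rewrite fsumEFin // -(fimfunE _ x); over.
  by [].
rewrite ge0_integral_fsum//; last 2 first.
  - move=> y; apply: emeasurable_funM => //.
    exact/measurable_EFinP.
  - by move=> m y Ey; apply: mule_ge0; [rewrite EFinM; exact: nnfun_muleindic_ge0|rewrite lee_fin].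
apply: eq_fsbigr => r rhn.
under [RHS]eq_integral do rewrite EFinM.
rewrite integralZl_indic_nnsfun => //.
under eq_integral do rewrite EFinM -muleA.
rewrite ge0_integralZl//.
- under eq_integral do rewrite muleC.
  rewrite (eq_integral (g \_ (h n @^-1` [set r]))); last first.
    by move=> x xE; rewrite epatch_indic.
  rewrite integral_indic ?setIT //= /dens -integral_mkcond.
  by [].
- apply: emeasurable_funM; first exact/measurable_EFinP.
  exact/measurable_EFinP.
- by move=> t Et; rewrite mule_ge0 ?lee_fin.
- by move: rhn; rewrite inE => -[t _ <-]; rewrite lee_fin.
Qed.

End density.

Section transfer.
Context d (T : measurableType d) d' (T' : measurableType d') (R : realType)
  (mu : {measure set T -> \bar R}).
Variables (h : T -> T') (F1 F2 : T -> R).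
Hypotheses (mh : measurable_fun setT h)
  (mF1 : measurable_fun setT F1) (mF2 : measurable_fun setT F2)
  (F10 : forall x, 0 <= F1 x) (F20 : forall x, 0 <= F2 x).
Local Open Scope ereal_scope.
Hypothesis eqF : forall B, measurable B ->
  \int[mu]_(x in h @^-1` B) (F1 x)%:E = \int[mu]_(x in h @^-1` B) (F2 x)%:E.

Lemma transfer_ge0 (g : T' -> \bar R) : measurable_fun setT g -> (forall y, 0 <= g y) ->
  \int[mu]_x (g (h x) * (F1 x)%:E) = \int[mu]_x (g (h x) * (F2 x)%:E).
Proof.
move=> mg g0.
have mgh : measurable_fun setT (g \o h) by exact: measurableT_comp.
rewrite -(integral_dens mu mF1 F10 (f := g \o h)) //.
rewrite -(integral_dens mu mF2 F20 (f := g \o h)) //.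
rewrite -[in LHS](preimage_setT h) -[in RHS](preimage_setT h).
rewrite -!(ge0_integral_pushforward mh) //.
apply: eq_measure_integral => A mA _.
  exact: eqF.
by move=> x; exact: g0.
by move=> x; exact: g0.
Qed.

End transfer.
Section helpers.
Context d (T : measurableType d) (R : realType) (mu : {measure set T -> \bar R}).
Local Open Scope ereal_scope.

Lemma EFin_sub_eq0 (a b : \bar R) : a \is a fin_num -> b \is a fin_num -> a - b = 0 -> a = b.
Proof.
move: a b => [a| |] [b| |] //= _ _.
by move/eqP; rewrite -EFinB eqe subr_eq0 => /eqP ->.
Qed.

End helpers.

Section transfer_signed.
Context d (T : measurableType d) (R : realType) (mu : {measure set T -> \bar R}).

Definition ppos (x : R) : R := Num.max x 0%R.
Definition pneg (x : R) : R := Num.max (- x) 0%R.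

Lemma pposneg2 x : (ppos x - pneg x = x)%R /\ (ppos x + pneg x = `|x|)%R.
Proof.
rewrite /ppos /pneg; case: (boolP (x <= 0)%R) => hx.
  have e1 : Num.max x 0%R = 0%R by apply/max_idPr.
  have e2 : Num.max (-x) 0%R = (-x)%R by apply/max_idPl; rewrite oppr_ge0.
  rewrite e1 e2 ler0_norm //; split; lra.
rewrite -ltNge in hx.
have e1 : Num.max x 0%R = x by apply/max_idPl; exact: ltW.
have e2 : Num.max (-x) 0%R = 0%R by apply/max_idPr; rewrite oppr_le0 ltW.
rewrite e1 e2 gtr0_norm //; split; lra.
Qed.
Lemma pposneg x : (ppos x - pneg x = x)%R. Proof. by case: (pposneg2 x). Qed.
Lemma pposDneg x : (ppos x + pneg x = `|x|)%R. Proof. by case: (pposneg2 x). Qed.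

Lemma ppos_ge0 x : (0 <= ppos x)%R. Proof. by rewrite /ppos le_max lexx orbT. Qed.
Lemma pneg_ge0 x : (0 <= pneg x)%R. Proof. by rewrite /pneg le_max lexx orbT. Qed.
Lemma ppos_le x : (ppos x <= `|x|)%R.
Proof. by rewrite -pposDneg lerDl pneg_ge0. Qed.
Lemma pneg_le x : (pneg x <= `|x|)%R.
Proof. by rewrite -pposDneg lerDr ppos_ge0. Qed.

Local Open Scope ereal_scope.
Lemma int_dom (f u v : T -> R) (c : R) : measurable_fun setT f ->
  mu.-integrable setT (EFin \o u) -> mu.-integrable setT (EFin \o v) ->
  (forall x, (`|f x| <= c * (`|u x| + `|v x|))%R) -> mu.-integrable setT (EFin \o f).
Proof.
move=> mf iu iv fuv.
apply: (@le_integrable _ _ _ mu setT measurableT _ (fun x => ((`|c| * (`|u x| + `|v x|))%R)%:E)).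
- exact/measurable_EFinP.
- move=> x _ /=; rewrite lee_fin; apply: (le_trans (fuv x)).
  by apply: (le_trans (ler_norm _)); rewrite !normrM normr_id.
- apply: (@eq_integrable _ _ _ mu setT measurableT (fun x => ((`|c|)%R)%:E * ((`|u x| + `|v x|)%R)%:E)).
    by move=> x _; rewrite EFinM.
  apply: integrableZl => //.
  apply: (@eq_integrable _ _ _ mu setT measurableT (fun x => ((`|u x|)%R)%:E + ((`|v x|)%R)%:E)%E).
    by move=> x _.
  by apply: integrableD => //; exact: integrable_norm.
Qed.

Lemma integralD_R (f1 f2 : T -> R) :
  mu.-integrable setT (EFin \o f1) -> mu.-integrable setT (EFin \o f2) ->
  \int[mu]_x ((f1 x + f2 x)%R)%:E = \int[mu]_x (f1 x)%:E + \int[mu]_x (f2 x)%:E.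
Proof.
by move=> i1 i2; rewrite -integralD_EFin.
Qed.

Lemma integralB_R (f1 f2 : T -> R) :
  mu.-integrable setT (EFin \o f1) -> mu.-integrable setT (EFin \o f2) ->
  \int[mu]_x ((f1 x - f2 x)%R)%:E = \int[mu]_x (f1 x)%:E - \int[mu]_x (f2 x)%:E.
Proof.
by move=> i1 i2; rewrite -integralB_EFin.
Qed.

Lemma integrableD_R (f1 f2 : T -> R) :
  mu.-integrable setT (EFin \o f1) -> mu.-integrable setT (EFin \o f2) ->
  mu.-integrable setT (EFin \o (fun x => f1 x + f2 x)%R).
Proof.
move=> i1 i2; apply: (@eq_integrable _ _ _ mu setT measurableT (fun x => (f1 x)%:E + (f2 x)%:E)).
  by move=> x _; rewrite /= EFinD.
exact: integrableD.
Qed.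

Lemma integrableB_R (f1 f2 : T -> R) :
  mu.-integrable setT (EFin \o f1) -> mu.-integrable setT (EFin \o f2) ->
  mu.-integrable setT (EFin \o (fun x => f1 x - f2 x)%R).
Proof.
move=> i1 i2; apply: (@eq_integrable _ _ _ mu setT measurableT (fun x => (f1 x)%:E - (f2 x)%:E)).
  by move=> x _; rewrite /= EFinB.
exact: integrableB.
Qed.

Lemma addsub0 (a b c : \bar R) : a \is a fin_num -> b \is a fin_num -> b = c -> a + b - (a + c) = 0.
Proof. by move=> fa fb <-; rewrite subee // fin_numD fa fb. Qed.

Lemma alg4 (g z w a b p q r s : R) : (a - b = g)%R -> ((p + s) - (r + q) = z - w)%R ->
  (g * z - g * w = (a * (p + s) + b * (r + q)) - (a * (r + q) + b * (p + s)))%R.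
Proof. by move=> <- e; rewrite -mulrBr -e; ring. Qed.

Lemma integrable_sumR (I : Type) (s : seq I) (F : I -> T -> R) :
  (forall i, mu.-integrable setT (EFin \o F i)) ->
  mu.-integrable setT (fun x => (\sum_(i <- s) F i x)%:E).
Proof.
move=> iF.
apply: (@eq_integrable _ _ _ mu setT measurableT (fun x => \sum_(i <- s) (F i x)%:E)).
  by move=> x _; rewrite sumEFin.
by apply: integrable_sum => // i _; exact: iF.
Qed.

Lemma integral_sumR (I : Type) (s : seq I) (F : I -> T -> R) :
  (forall i, mu.-integrable setT (EFin \o F i)) ->
  \int[mu]_x (\sum_(i <- s) F i x)%:E = \sum_(i <- s) \int[mu]_x (F i x)%:E.
Proof.
move=> iF; rewrite -integral_sum //.
by apply: eq_integral => x _; rewrite sumEFin.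
Qed.

Variables (d' : measure_display) (T' : measurableType d').

Lemma transfer (h : T -> T') (Z W : T -> R) (g : T' -> R) :
  measurable_fun setT h -> measurable_fun setT Z -> measurable_fun setT W ->
  measurable_fun setT g ->
  mu.-integrable setT (EFin \o Z) -> mu.-integrable setT (EFin \o W) ->
  (forall B, measurable B -> \int[mu]_(x in h @^-1` B) (Z x)%:E =
                            \int[mu]_(x in h @^-1` B) (W x)%:E) ->
  mu.-integrable setT (fun x => (g (h x) * Z x)%:E) ->
  mu.-integrable setT (fun x => (g (h x) * W x)%:E) ->
  \int[mu]_x (g (h x) * Z x)%:E = \int[mu]_x (g (h x) * W x)%:E.
Proof.
move=> mh mZ mW mg iZ iW eqZW igZ igW.
pose F1 x := (ppos (Z x) + pneg (W x))%R.
pose F2 x := (ppos (W x) + pneg (Z x))%R.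
have mF1 : measurable_fun setT F1.
  by apply: measurable_funD; [exact: measurable_funrpos|exact: measurable_funrneg].
have mF2 : measurable_fun setT F2.
  by apply: measurable_funD; [exact: measurable_funrpos|exact: measurable_funrneg].
have F10 x : (0 <= F1 x)%R by rewrite addr_ge0 ?ppos_ge0 ?pneg_ge0.
have F20 x : (0 <= F2 x)%R by rewrite addr_ge0 ?ppos_ge0 ?pneg_ge0.
have F12 x : (F1 x - F2 x = Z x - W x)%R.
  by have := pposneg (Z x); have := pposneg (W x); rewrite /F1 /F2; lra.
have iF1 : mu.-integrable setT (EFin \o F1).
  apply: (int_dom (c := 1%R) mF1 iZ iW) => x; rewrite mul1r ger0_norm//.
  by apply: lerD; [exact: ppos_le|exact: pneg_le].
have iF2 : mu.-integrable setT (EFin \o F2).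
  apply: (int_dom (c := 1%R) mF2 iZ iW) => x; rewrite mul1r ger0_norm//.
  by rewrite [X in (X <= _)%R]addrC; apply: lerD; [exact: pneg_le|exact: ppos_le].
have eqF B : measurable B -> \int[mu]_(x in h @^-1` B) (F1 x)%:E =
                            \int[mu]_(x in h @^-1` B) (F2 x)%:E.
  move=> mB.
  have mA : measurable (h @^-1` B) by rewrite -[X in measurable X]setTI; exact: mh.
  have sub := (@integrableS _ _ _ mu setT (h @^-1` B) _ measurableT mA (@subsetT _ _)).
  apply: EFin_sub_eq0.
  - by apply: integrable_fin_num => //; exact: sub.
  - by apply: integrable_fin_num => //; exact: sub.
  rewrite -integralB_EFin //; [|exact: sub|exact: sub].
  transitivity (\int[mu]_(x in h @^-1` B) ((Z x)%:E - (W x)%:E)).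
    by apply: eq_integral => x _; rewrite -!EFinB F12.
  rewrite integralB_EFin //; [|exact: sub|exact: sub].
  rewrite eqZW // subee //.
  by apply: integrable_fin_num => //; exact: sub.
pose G1 y := ppos (g y).
pose G2 y := pneg (g y).
have mG1 : measurable_fun setT G1 by exact: measurable_funrpos.
have mG2 : measurable_fun setT G2 by exact: measurable_funrneg.
have tge0 (G : T' -> R) : measurable_fun setT G -> (forall y, 0 <= G y)%R ->
    \int[mu]_x ((G (h x) * F1 x)%R)%:E = \int[mu]_x ((G (h x) * F2 x)%R)%:E.
  move=> mG G0.
  under eq_integral do rewrite EFinM.
  under [RHS]eq_integral do rewrite EFinM.
  apply: (transfer_ge0 mh mF1 mF2 F10 F20 eqF (g := EFin \o G)).
    exact/measurable_EFinP.
  by move=> y; rewrite lee_fin.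
have iGF (G F : T -> R) : measurable_fun setT G -> measurable_fun setT F ->
    (forall x, 0 <= G x <= `|g (h x)|)%R -> (forall x, 0 <= F x <= `|Z x| + `|W x|)%R ->
    mu.-integrable setT (EFin \o (fun x => G x * F x)%R).
  move=> mG mF hG hF.
  apply: (int_dom (c := 1%R) _ igZ igW).
    exact: measurable_funM.
  move=> x; rewrite mul1r !normrM -mulrDr.
  have /andP[G0 G1'] := hG x; have /andP[F0 F1'] := hF x.
  rewrite (ger0_norm G0) (ger0_norm F0).
  by apply: ler_pM.
have hG1 x : (0 <= G1 (h x) <= `|g (h x)|)%R by rewrite ppos_ge0 ppos_le.
have hG2 x : (0 <= G2 (h x) <= `|g (h x)|)%R by rewrite pneg_ge0 pneg_le.
have hF1 x : (0 <= F1 x <= `|Z x| + `|W x|)%R.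
  by rewrite F10 /F1 lerD ?ppos_le ?pneg_le.
have hF2 x : (0 <= F2 x <= `|Z x| + `|W x|)%R.
  by rewrite F20 /F2 [X in (X <= _)%R]addrC lerD ?ppos_le ?pneg_le.
have mGh (G : T' -> R) : measurable_fun setT G -> measurable_fun setT (G \o h).
  by move=> mG; exact: measurableT_comp.
have i11 := iGF _ _ (mGh _ mG1) mF1 hG1 hF1.
have i12 := iGF _ _ (mGh _ mG1) mF2 hG1 hF2.
have i21 := iGF _ _ (mGh _ mG2) mF1 hG2 hF1.
have i22 := iGF _ _ (mGh _ mG2) mF2 hG2 hF2.
apply: EFin_sub_eq0.
- exact: integrable_fin_num.
- exact: integrable_fin_num.
rewrite -integralB_R //.
transitivity (\int[mu]_x (((G1 (h x) * F1 x + G2 (h x) * F2 x) -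
                         (G1 (h x) * F2 x + G2 (h x) * F1 x))%R)%:E).
  apply: eq_integral => x _; congr EFin.
  by apply: alg4; [exact: pposneg|rewrite -F12].
rewrite integralB_R; last 2 first.
- by apply: (integrableD_R i11 i22).
- by apply: (integrableD_R i12 i21).
rewrite integralD_R // integralD_R //.
rewrite (tge0 G1) // ?ppos_ge0 //.
apply: addsub0; [exact: integrable_fin_num|exact: integrable_fin_num|].
exact: (esym (tge0 G2 mG2 (fun y => pneg_ge0 (g y)))).
move=> y; exact: ppos_ge0.
Qed.

End transfer_signed.

Section setting.
Context (d : measure_display) (Omega : measurableType d) (R : realType)
  (P : probability Omega R)
  (dX : measure_display) (TX : measurableType dX) (K : nat)
  (X : Omega -> TX) (lab : Omega -> 'I_K)
  (f : TX -> 'I_K -> R) (q : TX -> 'I_K -> R) (c : 'I_K -> R -> R).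
Hypotheses (mX : measurable_fun setT X)
  (mlab : forall k, measurable [set w | lab w = k])
  (simf : simplex_valued f)
  (mf : forall k, measurable_fun setT (fun x => f x k))
  (cq : is_cond_class_prob P X lab q).
Local Notation Y := (fun w => onehot R (lab w)).
Local Notation S := (fun w => f (X w)).
Local Notation Q := (fun w => q (X w)).
Local Notation C := (fun w k => c k (f (X w) k)).
Hypothesis cal : is_classwise_calib P S Y c.

Lemma YE w k : Y w k = \1_[set w | lab w = k] w.
Proof.
rewrite /onehot indicE.
by case: eqP => h; [rewrite mem_set|rewrite memNset].
Qed.

Lemma mY k : measurable_fun setT (fun w => Y w k).
Proof.
rewrite (_ : (fun w => Y w k) = \1_[set w | lab w = k]); last first.
  by apply/funext => w; rewrite YE.
exact: measurable_indic.
Qed.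

Lemma Y01 w k : Y w k = 0 \/ Y w k = 1.
Proof. by rewrite /onehot; case: (lab w == k); [right|left]. Qed.

Lemma mS k : measurable_fun setT (fun w => S w k).
Proof. exact: measurableT_comp (mf k) mX. Qed.

Lemma mQ k : measurable_fun setT (fun w => Q w k).
Proof. by case: (cq k) => mq _; exact: measurableT_comp mq mX. Qed.

Lemma mC k : measurable_fun setT (fun w => C w k).
Proof. by case: (cal k) => mc _; exact: measurableT_comp mc (mS k). Qed.

Lemma S01 w k : 0 <= S w k <= 1.
Proof.
have [h0 h1] := simf (X w).
rewrite h0 /= -h1 (bigD1 k) //= lerDl.
by apply: sumr_ge0 => i _; exact: h0.
Qed.

Lemma iS k : P.-integrable setT (fun w => (S w k)%:E).
Proof.
apply: (int_dom (c := 1) (u := cst 1) (v := cst 0) (mS k)).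
- exact: finite_measure_integrable_cst.
- exact: finite_measure_integrable_cst.
- move=> w /=; rewrite normr0 normr1 addr0 mul1r.
  by have /andP[h0 h1] := S01 w k; rewrite ger0_norm.
Qed.

Lemma iY k : P.-integrable setT (fun w => (Y w k)%:E).
Proof.
apply: (int_dom (c := 1) (u := cst 1) (v := cst 0) (mY k)).
- exact: finite_measure_integrable_cst.
- exact: finite_measure_integrable_cst.
- move=> w /=; rewrite normr0 normr1 addr0 mul1r.
  by case: (Y01 w k) => ->; rewrite ?normr0 ?normr1.
Qed.

Lemma iQ k : P.-integrable setT (fun w => (Q w k)%:E).
Proof. by case: (cq k) => _ []. Qed.

Lemma iC k : P.-integrable setT (fun w => (C w k)%:E).
Proof. by case: (cal k) => _ []. Qed.

Local Open Scope ereal_scope.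

Lemma calT k (g : R -> R) : measurable_fun setT g ->
  P.-integrable setT (fun w => (g (S w k) * C w k)%:E) ->
  P.-integrable setT (fun w => (g (S w k) * Y w k)%:E) ->
  \int[P]_w (g (S w k) * C w k)%:E = \int[P]_w (g (S w k) * Y w k)%:E.
Proof.
move=> mg i1 i2.
apply: (transfer (h := fun w => S w k) (Z := fun w => C w k) (W := fun w => Y w k)) => //.
- exact: mS.
- exact: mC.
- exact: mY.
- exact: iC.
- exact: iY.
- by move=> B mB; case: (cal k) => _ [_]; apply.
Qed.

Lemma cqT k (g : TX -> R) : measurable_fun setT g ->
  P.-integrable setT (fun w => (g (X w) * Q w k)%:E) ->
  P.-integrable setT (fun w => (g (X w) * Y w k)%:E) ->
  \int[P]_w (g (X w) * Q w k)%:E = \int[P]_w (g (X w) * Y w k)%:E.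
Proof.
move=> mg i1 i2.
apply: (transfer (h := X) (Z := fun w => Q w k) (W := fun w => Y w k)) => //.
- exact: mQ.
- exact: mY.
- exact: iQ.
- exact: iY.
- move=> B mB; case: (cq k) => _ [_ ->] //.
  have mXB : measurable (X @^-1` B) by rewrite -[X in measurable X]setTI; exact: mX.
  under eq_integral do rewrite YE.
  by rewrite integral_indic // setIC.
Qed.

Local Close Scope ereal_scope.

Definition sqi (u : Omega -> R) := measurable_fun setT u /\
  P.-integrable setT (fun w => (u w ^+ 2)%:E).

Lemma sqi_eq u v : (forall w, u w = v w) -> sqi u -> sqi v.
Proof. by move=> e; rewrite (_ : u = v) //; apply/funext. Qed.

Lemma sq_mul u v : sqi u -> sqi v -> P.-integrable setT (fun w => (u w * v w)%:E).
Proof.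
move=> [mu' iu] [mv iv].
apply: (int_dom (c := 1) (u := fun w => u w ^+ 2) (v := fun w => v w ^+ 2) _ iu iv).
  exact: measurable_funM.
move=> w; rewrite mul1r normrM (ger0_norm (sqr_ge0 (u w))) (ger0_norm (sqr_ge0 (v w))).
rewrite -(real_normK (num_real (u w))) -(real_normK (num_real (v w))).
have := normr_ge0 (u w); have := normr_ge0 (v w); nra.
Qed.

Lemma sq_add u v : sqi u -> sqi v -> sqi (fun w => u w + v w).
Proof.
move=> [mu' iu] [mv iv]; split; first exact: measurable_funD.
apply: (int_dom (c := 2) (u := fun w => u w ^+ 2) (v := fun w => v w ^+ 2) _ iu iv).
  by apply: measurable_funX; exact: measurable_funD.
move=> w; rewrite !ger0_norm ?sqr_ge0 //.
have := sqr_ge0 (u w - v w); nra.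
Qed.

Lemma sq_opp u : sqi u -> sqi (fun w => - u w).
Proof.
move=> [mu' iu]; split; first exact: measurable_funN.
by apply: (@eq_integrable _ _ _ P setT measurableT (fun w => (u w ^+ 2)%:E)) => // w _; rewrite sqrrN.
Qed.

Lemma sq_sub u v : sqi u -> sqi v -> sqi (fun w => u w - v w).
Proof. by move=> su sv; apply: sq_add => //; exact: sq_opp. Qed.

Lemma sq_bnd (u : Omega -> R) : measurable_fun setT u -> (forall w, `|u w| <= 1) -> sqi u.
Proof.
move=> mu' ub; split => //.
apply: (int_dom (c := 1) (u := cst 1) (v := cst 0)).
- exact: measurable_funX.
- exact: finite_measure_integrable_cst.
- exact: finite_measure_integrable_cst.
- move=> w /=; rewrite normr0 normr1 addr0 mul1r ger0_norm ?sqr_ge0 //.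
  rewrite -(real_normK (num_real (u w))); have := ub w; have := normr_ge0 (u w); nra.
Qed.

Lemma sqS k : sqi (fun w => S w k).
Proof.
apply: sq_bnd; first exact: mS.
by move=> w; have /andP[h0 h1] := S01 w k; rewrite ger0_norm.
Qed.

Lemma sqY k : sqi (fun w => Y w k).
Proof.
apply: sq_bnd; first exact: mY.
by move=> w; case: (Y01 w k) => ->; rewrite ?normr0 ?normr1.
Qed.

Lemma brier_sq (p r : Omega -> 'I_K -> R) k :
  measurable_fun setT (fun w => p w k) -> measurable_fun setT (fun w => r w k) ->
  P.-integrable setT (fun w => brier (p w) (r w)) -> sqi (fun w => p w k - r w k).
Proof.
move=> mp mr ib; split; first exact: measurable_funB.
apply: (@le_integrable _ _ _ P setT measurableT _ (fun w => brier (p w) (r w))) => //.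
  by apply/measurable_EFinP; apply: measurable_funX; exact: measurable_funB.
move=> w _; rewrite /brier /= lee_fin !ger0_norm ?sqr_ge0 ?sumr_ge0 // => [|i _].
  by rewrite (bigD1 k) //= lerDl sumr_ge0 // => i _; exact: sqr_ge0.
exact: sqr_ge0.
Qed.

Local Open Scope ereal_scope.

Lemma brier_part :
  (P.-integrable setT (fun w => brier (S w) (Y w)) /\
    P.-integrable setT (fun w => brier (S w) (C w)) /\
    P.-integrable setT (fun w => brier (C w) (Q w)) /\
    P.-integrable setT (fun w => brier (Q w) (Y w))) ->
   (\int[P]_w brier (S w) (Y w) =
    \int[P]_w brier (S w) (C w) + \int[P]_w brier (C w) (Q w)
      + \int[P]_w brier (Q w) (Y w)).
Proof.
move=> [i1 [i2 [i3 i4]]].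
have sa k := brier_sq (mS k) (mC k) i2.
have sb k := brier_sq (mC k) (mQ k) i3.
have se k := brier_sq (mQ k) (mY k) i4.
have sC k : sqi (fun w => C w k).
  by apply: (sqi_eq _ (sq_sub (sqS k) (sa k))) => w; rewrite subKr.
have sQ k : sqi (fun w => Q w k).
  by apply: (sqi_eq _ (sq_sub (sC k) (sb k))) => w; rewrite subKr.
have iA1 k : P.-integrable setT (EFin \o (fun w => (S w k - C w k) * C w k)%R) := sq_mul (sa k) (sC k).
have iA2 k : P.-integrable setT (EFin \o (fun w => (S w k - C w k) * Y w k)%R) := sq_mul (sa k) (sqY k).
have iB1 k : P.-integrable setT (EFin \o (fun w => (C w k - Q w k) * Q w k)%R) := sq_mul (sb k) (sQ k).
have iB2 k : P.-integrable setT (EFin \o (fun w => (C w k - Q w k) * Y w k)%R) := sq_mul (sb k) (sqY k).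
have iAB k := integrableD_R (integrableB_R (iA1 k) (iA2 k)) (integrableB_R (iB1 k) (iB2 k)).
pose t k w := (2 * (((S w k - C w k) * C w k - (S w k - C w k) * Y w k) +
                    ((C w k - Q w k) * Q w k - (C w k - Q w k) * Y w k)))%R.
have it k : P.-integrable setT (EFin \o t k).
  rewrite /t; apply: (@eq_integrable _ _ _ P setT measurableT
     (fun w => 2%:E * ((((S w k - C w k) * C w k - (S w k - C w k) * Y w k) +
                    ((C w k - Q w k) * Q w k - (C w k - Q w k) * Y w k))%R)%:E)).
    by move=> w _; rewrite /= EFinM.
  apply: integrableZl => //; exact: iAB.
have t0 k : \int[P]_w (t k w)%:E = 0.
  transitivity (\int[P]_w (2%:E * ((((S w k - C w k) * C w k - (S w k - C w k) * Y w k) +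
                    ((C w k - Q w k) * Q w k - (C w k - Q w k) * Y w k))%R)%:E)).
    by apply: eq_integral => w _; rewrite /t EFinM.
  rewrite integralZl //; last exact: iAB.
  rewrite integralD_R; [|exact: (integrableB_R (iA1 k) (iA2 k))|exact: (integrableB_R (iB1 k) (iB2 k))].
  rewrite integralB_R; [|exact: iA1|exact: iA2].
  rewrite integralB_R; [|exact: iB1|exact: iB2].
  have -> : \int[P]_x ((S x k - C x k) * C x k)%:E = \int[P]_x ((S x k - C x k) * Y x k)%:E.
    apply: (calT (g := fun s => (s - c k s)%R)).
    - by apply: measurable_funB => //; case: (cal k).
    - exact: iA1.
    - exact: iA2.
  have -> : \int[P]_x ((C x k - Q x k) * Q x k)%:E = \int[P]_x ((C x k - Q x k) * Y x k)%:E.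
    apply: (cqT (g := fun x => (c k (f x k) - q x k)%R)).
    - apply: measurable_funB; last by case: (cq k).
      by case: (cal k) => mc _; exact: measurableT_comp mc (mf k).
    - exact: iB1.
    - exact: iB2.
  by rewrite !subee ?adde0 ?mule0 //; apply: integrable_fin_num => //; solve [exact: iA2|exact: iB2].
have ia : P.-integrable setT (fun w => (\sum_k (S w k - C w k) ^+ 2)%:E) by exact: i2.
have ib : P.-integrable setT (fun w => (\sum_k (C w k - Q w k) ^+ 2)%:E) by exact: i3.
have ie : P.-integrable setT (fun w => (\sum_k (Q w k - Y w k) ^+ 2)%:E) by exact: i4.
have isum : P.-integrable setT (fun w => (\sum_k t k w)%:E) by exact: integrable_sumR.
transitivity (\int[P]_w (((\sum_k (S w k - C w k) ^+ 2 + \sum_k (C w k - Q w k) ^+ 2)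
      + \sum_k (Q w k - Y w k) ^+ 2) + \sum_k t k w)%R%:E).
  apply: eq_integral => w _; rewrite /brier; congr EFin.
  rewrite -!big_split /=; apply: eq_bigr => k _; rewrite /t; ring.
rewrite integralD_R //; last first.
  by apply: integrableD_R => //; exact: integrableD_R.
rewrite integral_sumR // big1 ?adde0 //.
rewrite integralD_R //; last exact: integrableD_R.
by rewrite integralD_R.
Qed.

Local Close Scope ereal_scope.

Lemma logterm_fin (p r : R) : 0 <= r -> logterm p r \is a fin_num ->
  logterm p r = (r * ln r - r * ln p)%:E.
Proof.
move=> r0; rewrite /logterm; case: eqP => [->|rn0]; first by rewrite !mul0r subr0.
case: ifPn => // hp _.
have p0 : 0 < p by rewrite ltNge.
have rp : 0 < r by rewrite lt_neqAle eq_sym r0 andbT; apply/eqP.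
congr EFin; rewrite lnM ?posrE ?invr_gt0 // lnV ?posrE //; ring.
Qed.

Lemma logdiv_fin (p r : 'I_K -> R) : (forall k, 0 <= r k) ->
  logdiv p r \is a fin_num ->
  logdiv p r = (\sum_k (r k * ln (r k) - r k * ln (p k)))%:E.
Proof.
move=> r0 fin; rewrite /logdiv -sumEFin; apply: eq_bigr => k _.
apply: logterm_fin => //.
by move/sum_fin_numP : fin; apply => //; exact: mem_index_enum.
Qed.

Lemma mlt0 d0 (T0 : measurableType d0) (g : T0 -> R) : measurable_fun setT g ->
  measurable [set x | g x < 0].
Proof.
move=> mg; have := measurable_fun_ltr mg (@measurable_cst _ _ T0 R setT (0%R : R)) measurableT (Y := [set true]).
by rewrite setTI; apply.
Qed.

Lemma nonneg_ae (Z : Omega -> R) : measurable_fun setT Z ->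
  P.-integrable setT (EFin \o Z) ->
  (0 <= \int[P]_(w in [set w | (Z w < 0)%R]) (Z w)%:E)%E ->
  {ae P, forall w, (0 <= Z w)%R}.
Proof.
move=> mZ iZ hA.
have mA := mlt0 mZ.
have iA : P.-integrable [set w | (Z w < 0)%R] (EFin \o Z).
  exact: (integrableS measurableT mA (@subsetT _ _) iZ).
have h : (\int[P]_(x in [set w | (Z w < 0)%R]) `|(EFin \o Z) x| = 0)%E.
  apply/eqP; rewrite eq_le; apply/andP; split; last by apply: integral_ge0.
  rewrite (eq_integral (fun x => (-1)%:E * (Z x)%:E))%E; last first.
    move=> x; rewrite inE /= => zx.
    by rewrite -EFinM mulN1r ltr0_norm.
  by rewrite integralZl // mulN1e oppe_le0.
move/(ae_eq_integral_abs P mA) : h => /(_ _).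
have mZA : measurable_fun [set w | (Z w < 0)%R] (EFin \o Z).
  exact/measurable_EFinP/measurable_funTS.
move=> /(_ mZA) h.
apply: filterS h => w hw; case: (boolP (0 <= Z w)) => // hz.
rewrite -ltNge in hz.
have := hw hz; rewrite /= => /eqP; rewrite eqe => /eqP zw.
by move: hz; rewrite zw ltxx.
Qed.

Lemma Qnn k : {ae P, forall w, (0 <= Q w k)%R}.
Proof.
apply: nonneg_ae; [exact: mQ|exact: iQ|].
have mq : measurable_fun setT (fun x => q x k) by case: (cq k).
have mB := mlt0 mq.
have -> : [set w | (Q w k < 0)%R] = X @^-1` [set x | (q x k < 0)%R] by [].
by case: (cq k) => _ [_ ->].
Qed.

Lemma Cnn k : {ae P, forall w, (0 <= C w k)%R}.
Proof.
apply: nonneg_ae; [exact: mC|exact: iC|].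
have mc : measurable_fun setT (c k) by case: (cal k).
have mB := mlt0 mc.
have -> : [set w | (C w k < 0)%R] = (fun w => S w k) @^-1` [set s | (c k s < 0)%R] by [].
case: (cal k) => _ [_ ->] //.
apply: integral_ge0 => w _; rewrite lee_fin.
by case: (Y01 w k) => ->.
Qed.

Local Open Scope ereal_scope.

Lemma iYlnC k : P.-integrable setT (fun w => (Q w k * ln (C w k))%:E) ->
  P.-integrable setT (fun w => (Y w k * ln (C w k))%:E).
Proof.
move=> iQC.
pose L x := `|ln (c k (f x k))|%R.
have mc : measurable_fun setT (c k) by case: (cal k).
have mL : measurable_fun setT L.
  apply: measurableT_comp => //; apply: measurableT_comp; first exact: measurable_ln.
  exact: measurableT_comp mc (mf k).
have mlnC : measurable_fun setT (fun w => ln (C w k)).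
  by apply: measurableT_comp; [exact: measurable_ln|exact: mC].
pose Qp w := ppos (Q w k).
have mQp : measurable_fun setT Qp by exact: measurable_funrpos (mQ k).
have Y0 w : (0 <= Y w k)%R by case: (Y01 w k) => ->.
have eqF B : measurable B -> \int[P]_(w in X @^-1` B) (Y w k)%:E =
                             \int[P]_(w in X @^-1` B) (Qp w)%:E.
  move=> mB.
  have mXB : measurable (X @^-1` B) by rewrite -[X in measurable X]setTI; exact: mX.
  rewrite [RHS](@ae_eq_integral _ _ _ P _ (fun w => (Q w k)%:E) (fun w => (Qp w)%:E)) //; last 3 first.
  - exact/measurable_EFinP/measurable_funTS.
  - by apply/measurable_EFinP/measurable_funTS; exact: mQ.
  - apply: filterS (Qnn k) => w hw _; congr EFin.
    by rewrite /Qp /ppos; apply/max_idPl.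
  case: (cq k) => _ [_ ->] //.
  under eq_integral do rewrite YE.
  by rewrite integral_indic // setIC.
have tr := transfer_ge0 mX (mY k) mQp Y0 (fun w => ppos_ge0 (Q w k)) eqF
  (g := EFin \o L).
apply/integrableP; split.
  by apply/measurable_EFinP; apply: measurable_funM => //; exact: mY.
rewrite (eq_integral (fun w => (L (X w))%:E * (Y w k)%:E)); last first.
  move=> w _; rewrite -EFinM /= normrM (ger0_norm (Y0 w)) mulrC //.
rewrite tr //; last 2 first.
  exact/measurable_EFinP.
  by move=> y; rewrite lee_fin normr_ge0.
case/integrableP : iQC => _; apply: le_lt_trans.
apply: ge0_le_integral => //.
- by move=> w _; apply: mule_ge0; rewrite /= lee_fin; [exact: normr_ge0|exact: ppos_ge0].
- apply: emeasurable_funM; apply/measurable_EFinP => //.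
  exact: measurableT_comp mL mX.
- apply: measurableT_comp => //; apply/measurable_EFinP; apply: measurable_funM => //.
  exact: mQ.
- move=> w _; rewrite -EFinM /= lee_fin normrM mulrC.
  by apply: ler_wpM2r; [exact: normr_ge0|exact: ppos_le].
Qed.

Lemma int_swap (u v : Omega -> R) : P.-integrable setT (fun w => (u w * v w)%:E) ->
  P.-integrable setT (fun w => (v w * u w)%:E).
Proof.
apply: (@eq_integrable _ _ _ P setT measurableT).
by move=> w _; rewrite mulrC.
Qed.

Lemma integral_swap (u v : Omega -> R) :
  \int[P]_w (u w * v w)%:E = \int[P]_w (v w * u w)%:E.
Proof. by apply: eq_integral => w _; rewrite mulrC. Qed.

Lemma log_ae (p r : Omega -> 'I_K -> R) :
  {ae P, forall w k, (0 <= r w k)%R} ->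
  P.-integrable setT (fun w => logdiv (p w) (r w)) ->
  (forall k, P.-integrable setT (fun w => (r w k * ln (r w k))%:E)) ->
  (forall k, P.-integrable setT (fun w => (r w k * ln (p w k))%:E)) ->
  \int[P]_w logdiv (p w) (r w) =
  \sum_k (\int[P]_w (r w k * ln (r w k))%:E - \int[P]_w (r w k * ln (p w k))%:E).
Proof.
move=> r0 il i1 i2.
have iB k : P.-integrable setT (EFin \o (fun w => r w k * ln (r w k) - r w k * ln (p w k))%R).
  exact: (integrableB_R (i1 k) (i2 k)).
have isum := integrable_sumR (index_enum 'I_K) iB.
rewrite (@ae_eq_integral _ _ _ P _
  (fun w => (\sum_k (r w k * ln (r w k) - r w k * ln (p w k)))%R%:E)) //.
- rewrite integral_sumR //; apply: eq_bigr => k _.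
  exact: (integralB_R (i1 k) (i2 k)).
- exact: measurable_int il.
- exact: measurable_int isum.
- apply: filterS2 r0 (integrable_ae measurableT il) => w h1 h2 _.
  exact: logdiv_fin (h2 I).
Qed.

Lemma arith4 (a1 a2 b1 c1 : \bar R) : a1 \is a fin_num -> a2 \is a fin_num ->
  b1 \is a fin_num -> c1 \is a fin_num ->
  a1 - a2 = (b1 - a2) + (c1 - b1) + (a1 - c1).
Proof.
move: a1 a2 b1 c1 => [a| |] [b| |] [c0| |] [e| |] //= _ _ _ _.
by rewrite -!EFinB -!EFinD; congr EFin; ring.
Qed.

Lemma log_part :
  (P.-integrable setT (fun w => logdiv (S w) (Y w)) /\
    P.-integrable setT (fun w => logdiv (S w) (C w)) /\
    P.-integrable setT (fun w => logdiv (C w) (Q w)) /\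
    P.-integrable setT (fun w => logdiv (Q w) (Y w)) /\
    (forall k,
      P.-integrable setT (fun w => (Y w k * ln (S w k))%:E) /\
      P.-integrable setT (fun w => (C w k * ln (S w k))%:E) /\
      P.-integrable setT (fun w => (C w k * ln (C w k))%:E) /\
      P.-integrable setT (fun w => (Q w k * ln (C w k))%:E) /\
      P.-integrable setT (fun w => (Q w k * ln (Q w k))%:E) /\
      P.-integrable setT (fun w => (Y w k * ln (Q w k))%:E))) ->
   (\int[P]_w logdiv (S w) (Y w) =
    \int[P]_w logdiv (S w) (C w) + \int[P]_w logdiv (C w) (Q w)
      + \int[P]_w logdiv (Q w) (Y w)).
Proof.
move=> [l1 [l2 [l3 [l4 ik]]]].
have YlnY w k : (Y w k * ln (Y w k) = 0)%R.
  by case: (Y01 w k) => ->; rewrite ?mul0r ?ln1 ?mulr0.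
have iYY k : P.-integrable setT (fun w => (Y w k * ln (Y w k))%:E).
  apply: (@eq_integrable _ _ _ P setT measurableT (cst 0)); last exact: integrable0.
  by move=> w _; rewrite YlnY.
have Y0 : {ae P, forall w k, (0 <= Y w k)%R}.
  by apply: nearW => w j; case: (Y01 w j) => ->.
have C0 : {ae P, forall w k, (0 <= C w k)%R} by apply: filter_forall => j; exact: Cnn.
have Q0 : {ae P, forall w k, (0 <= Q w k)%R} by apply: filter_forall => j; exact: Qnn.
rewrite (log_ae Y0 l1 iYY (fun k => (ik k).1)).
rewrite (log_ae C0 l2 (fun k => (ik k).2.2.1) (fun k => (ik k).2.1)).
rewrite (log_ae Q0 l3 (fun k => (ik k).2.2.2.2.1) (fun k => (ik k).2.2.2.1)).
rewrite (log_ae Y0 l4 iYY (fun k => (ik k).2.2.2.2.2)).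
rewrite -!big_split /=; apply: eq_bigr => k _.
have [iYS [iCS [iCC [iQC [iQQ iYQ]]]]] := ik k.
have iYC := iYlnC iQC.
have mlnS : measurable_fun setT (fun w => ln (S w k)).
  by apply: measurableT_comp; [exact: measurable_ln|exact: mS].
have mc : measurable_fun setT (c k) by case: (cal k).
have mlnc : measurable_fun setT (fun s => ln (c k s)).
  by apply: measurableT_comp; [exact: measurable_ln|exact: mc].
have e1 : \int[P]_w (Y w k * ln (S w k))%:E = \int[P]_w (C w k * ln (S w k))%:E.
  rewrite [LHS]integral_swap [RHS]integral_swap; symmetry.
  apply: (calT (g := @ln R)); [exact: measurable_ln|exact: int_swap|exact: int_swap].
have e2 : \int[P]_w (C w k * ln (C w k))%:E = \int[P]_w (Q w k * ln (C w k))%:E.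
  transitivity (\int[P]_w (Y w k * ln (C w k))%:E).
    rewrite [LHS]integral_swap [RHS]integral_swap.
    apply: (calT (g := fun s => ln (c k s))); [exact: mlnc|exact: int_swap|exact: int_swap].
  rewrite [LHS]integral_swap [RHS]integral_swap; symmetry.
  apply: (cqT (g := fun x => ln (c k (f x k)))); [|exact: int_swap|exact: int_swap].
  exact: measurableT_comp mlnc (mf k).
have e3 : \int[P]_w (Q w k * ln (Q w k))%:E = \int[P]_w (Y w k * ln (Q w k))%:E.
  rewrite [LHS]integral_swap [RHS]integral_swap.
  apply: (cqT (g := fun x => ln (q x k))); [|exact: int_swap|exact: int_swap].
  apply: measurableT_comp; first exact: measurable_ln.
  by case: (cq k).
rewrite e1 -e2 -e3.
by apply: arith4; exact: integrable_fin_num.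
Qed.

End setting.

Unset Implicit Arguments.
Set Strict Implicit.

Theorem proposition6
  (d : measure_display) (Omega : measurableType d) (R : realType)
  (P : probability Omega R)
  (dX : measure_display) (TX : measurableType dX) (K : nat)
  (X : Omega -> TX) (lab : Omega -> 'I_K)
  (f : TX -> 'I_K -> R) (q : TX -> 'I_K -> R) (c : 'I_K -> R -> R) :
  measurable_fun setT X ->
  (forall k, measurable [set w | lab w = k]) ->
  simplex_valued f ->
  (forall k, measurable_fun setT (fun x => f x k)) ->
  is_cond_class_prob P X lab q ->
  let Y := fun w => onehot R (lab w) in
  let S := fun w => f (X w) in
  let Q := fun w => q (X w) in
  let C := fun w k => c k (S w k) in
  is_classwise_calib P S Y c ->
  (* Brier divergence *)
  ((P.-integrable setT (fun w => brier (S w) (Y w)) /\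
    P.-integrable setT (fun w => brier (S w) (C w)) /\
    P.-integrable setT (fun w => brier (C w) (Q w)) /\
    P.-integrable setT (fun w => brier (Q w) (Y w))) ->
   (\int[P]_w brier (S w) (Y w) =
    \int[P]_w brier (S w) (C w) + \int[P]_w brier (C w) (Q w)
      + \int[P]_w brier (Q w) (Y w))%E) /\
  (* log-loss divergence *)
  ((P.-integrable setT (fun w => logdiv (S w) (Y w)) /\
    P.-integrable setT (fun w => logdiv (S w) (C w)) /\
    P.-integrable setT (fun w => logdiv (C w) (Q w)) /\
    P.-integrable setT (fun w => logdiv (Q w) (Y w)) /\
    (forall k,
      P.-integrable setT (fun w => (Y w k * ln (S w k))%:E) /\
      P.-integrable setT (fun w => (C w k * ln (S w k))%:E) /\
      P.-integrable setT (fun w => (C w k * ln (C w k))%:E) /\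
      P.-integrable setT (fun w => (Q w k * ln (C w k))%:E) /\
      P.-integrable setT (fun w => (Q w k * ln (Q w k))%:E) /\
      P.-integrable setT (fun w => (Y w k * ln (Q w k))%:E))) ->
   (\int[P]_w logdiv (S w) (Y w) =
    \int[P]_w logdiv (S w) (C w) + \int[P]_w logdiv (C w) (Q w)
      + \int[P]_w logdiv (Q w) (Y w))%E).
Proof.
move=> mX mlab simf mf cq Y S Q C cal; split.
- exact: (brier_part mX mlab simf mf cq cal).
- exact: (log_part mX mlab mf cq cal).
Qed.
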